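(* Let $\mathcal{H}$ be a separable infinite-dimensional complex Hilbert space, let $T\in\mathscr{B}(\mathcal{H})$ have dense range and let $\varepsilon>0$. Then the map $x_0\mapsto y_{x_0,\varepsilon}$, from the open set $\{x_0\in\mathcal{H}:\|x_0\|>\varepsilon\}$ to $\mathcal{H}$, is continuous (for the norm topology).
   Context: For $T\in\mathscr{B}(\mathcal{H})$ with dense range, $x_0\neq 0$ and $0<\varepsilon<\|x_0\|$, the extremal vector $y_{x_0,\varepsilon}$ is the unique vector $y_0\in\mathcal{H}$ with $\|Ty_0-x_0\|\leqslant\varepsilon$ and $\|y_0\|=\inf\{\|y\|:\|Ty-x_0\|\leqslant\varepsilon\}$. *)

(* Defs.v *)
From HB Require Import structures.
From mathcomp Require Import all_boot all_order all_algebra.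
From mathcomp Require Import all_classical all_reals all_analysis.
From mathcomp Require Import complex.
Set Implicit Arguments. Unset Strict Implicit. Unset Printing Implicit Defensive.
Import Order.TTheory GRing.Theory Num.Theory Num.Def.
Import numFieldNormedType.Exports.
Local Open Scope classical_set_scope.
Local Open Scope ring_scope.
Local Open Scope complex_scope.

Definition is_inner_product (R : realType) (H : normedModType R[i])
  (ip : H -> H -> R[i]) : Prop :=
  [/\ (forall (a : R[i]) (x y z : H), ip (a *: x + y) z = a * ip x z + ip y z),
      (forall x y : H, ip y x = (ip x y)^*) &
      (forall x : H, ip x x = `|x| ^+ 2)].

Definition is_hilbert (R : realType) (H : completeNormedModType R[i]) : Prop :=
  exists ip : H -> H -> R[i], is_inner_product ip.

Definition separable (T : topologicalType) : Prop :=
  exists D : set T, countable D /\ dense D.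

Definition infinite_dimensional (R : realType) (H : normedModType R[i]) : Prop :=
  forall n : nat, exists v : 'I_n -> H,
    forall c : 'I_n -> R[i], \sum_(i < n) c i *: v i = 0 -> forall i, c i = 0.

Definition bounded_operator (R : realType) (H : normedModType R[i])
  (T : H -> H) : Prop := linear T /\ continuous T.

Definition is_extremal_vector (R : realType) (H : normedModType R[i])
  (T : H -> H) (x0 : H) (eps : R) (y0 : H) : Prop :=
  `|T y0 - x0| <= eps%:C /\
  (forall y : H, `|T y - x0| <= eps%:C -> `|y0| <= `|y|).

(* the extremal vector y_{x0,eps} (the unique such vector) *)
Definition extremal_vector (R : realType) (H : normedModType R[i])
  (T : H -> H) (eps : R) (x0 : H) : H :=
  xget 0 [set y0 | is_extremal_vector T x0 eps y0].

(* Main.v *)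
Require Import Defs.
From HB Require Import structures.
From mathcomp Require Import all_boot all_order all_algebra.
From mathcomp Require Import all_classical all_reals all_analysis.
From mathcomp Require Import complex.
From mathcomp Require Import ring lra.
Set Implicit Arguments. Unset Strict Implicit.
Import Order.TTheory GRing.Theory Num.Theory Num.Def.
Import numFieldNormedType.Exports.
Local Open Scope classical_set_scope.
Local Open Scope ring_scope.
Local Open Scope complex_scope.
Section Norms.
Variable R : realType.
Variable H : normedModType R[i].
Implicit Types x y z : H.

Definition nr x : R := complex.Re `|x|.

Lemma nrE x : `|x| = (nr x)%:C.
Proof. by rewrite /nr RRe_real // ger0_real. Qed.

Lemma nr_ge0 x : 0 <= nr x.
Proof. by rewrite -ler0c -nrE normr_ge0. Qed.

Lemma nrD x y : nr (x + y) <= nr x + nr y.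
Proof. by have := ler_normD x y; rewrite !nrE -rmorphD lecR. Qed.

Lemma nrN x : nr (- x) = nr x.
Proof. by rewrite /nr normrN. Qed.

Lemma nrC x y : nr (x - y) = nr (y - x).
Proof. by rewrite /nr distrC. Qed.

Lemma nr0 : nr 0 = 0.
Proof. by rewrite /nr normr0. Qed.

Lemma normcR (a : R) : `|a%:C| = `|a|%:C :> R[i].
Proof. by rewrite normc_def /= expr0n /= addr0 sqrtr_sqr. Qed.

Lemma nrZ (a : R) x : nr (a%:C *: x) = `|a| * nr x.
Proof. by have := normrZ a%:C x; rewrite normcR !nrE -rmorphM => /complexI. Qed.

Lemma nr_lec x (e : R) : (`|x| <= e%:C) = (nr x <= e).
Proof. by rewrite nrE lecR. Qed.

Lemma nr_ltc x (e : R) : (`|x| < e%:C) = (nr x < e).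
Proof. by rewrite nrE ltcR. Qed.

Lemma nr_gtc x (e : R) : (e%:C < `|x|) = (e < nr x).
Proof. by rewrite nrE ltcR. Qed.

End Norms.
Section Para.
Variable R : realType.
Variable H : normedModType R[i].
Implicit Types x y z : H.

Lemma conjcD (a b : R[i]) : conjc (a + b) = conjc a + conjc b.
Proof. by case: a b => ? ? [? ?]; simpc. Qed.
Lemma conjcN (a : R[i]) : conjc (- a) = - conjc a.
Proof. by case: a => ? ?; simpc. Qed.

Lemma parallelogram (ip : H -> H -> R[i]) : is_inner_product ip -> forall x y,
  nr (x + y) ^+ 2 + nr (x - y) ^+ 2 = 2 * nr x ^+ 2 + 2 * nr y ^+ 2.
Proof.
case=> hl hc hn x y.
have ipD1 u v w : ip (u + v) w = ip u w + ip v w.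
  by have := hl 1 u v w; rewrite scale1r mul1r.
have ip0 w : ip 0 w = 0.
  have h := ipD1 0 0 w; rewrite addr0 in h.
  by apply: (addrI (ip 0 w)); rewrite addr0 -h.
have ipN1 u w : ip (- u) w = - ip u w.
  have h := ipD1 u (- u) w; rewrite subrr ip0 in h.
  by apply: (addrI (ip u w)); rewrite -h subrr.
have ipD2 u v w : ip w (u + v) = ip w u + ip w v.
  by rewrite (hc (u + v) w) ipD1 conjcD -(hc u w) -(hc v w).
have ipN2 u w : ip w (- u) = - ip w u.
  by rewrite (hc (- u) w) ipN1 conjcN -(hc u w).
have h : `|x + y| ^+ 2 + `|x - y| ^+ 2 = 2 * `|x| ^+ 2 + 2 * `|y| ^+ 2 :> R[i].
  rewrite -!hn !ipD1 !ipD2 !ipN1 !ipN2; ring.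
move: h; rewrite !nrE -!rmorphXn -(rmorph_nat (real_complex R) 2) -!rmorphM -!rmorphD.
by move/complexI.
Qed.
End Para.
Section Geo.
Variable R : realType.
Variable H : normedModType R[i].
Implicit Types a b x y z : H.

Lemma conv_id a b (t : R) :
  a + t%:C *: (b - a) = (1 - t)%:C *: a + t%:C *: b.
Proof.
rewrite scalerBr rmorphB rmorph1 scalerBl scale1r.
by rewrite [LHS]addrA [LHS]addrAC.
Qed.

Lemma conv_nr a b (t : R) : 0 <= t <= 1 ->
  nr (a + t%:C *: (b - a)) <= (1 - t) * nr a + t * nr b.
Proof.
case/andP=> t0 t1; rewrite conv_id.
apply: le_trans (nrD _ _) _.
by rewrite !nrZ !ger0_norm // subr_ge0.
Qed.

Lemma mid2 a b : (2 : R)%:C *: (a + (2^-1 : R)%:C *: (b - a)) = a + b.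
Proof.
rewrite scalerDr scalerA -rmorphM mulfV ?pnatr_eq0 // rmorph1 scale1r.
rewrite (rmorph_nat (real_complex R) 2) scaler_nat mulr2n.
by rewrite -addrA subrKC.
Qed.

Lemma mid_para (ip : H -> H -> R[i]) : is_inner_product ip -> forall a b,
  nr (a - b) ^+ 2 = 2 * nr a ^+ 2 + 2 * nr b ^+ 2
                    - 4 * nr (a + (2^-1 : R)%:C *: (b - a)) ^+ 2.
Proof.
move=> hip a b; have := parallelogram hip a b.
rewrite -(mid2 a b) nrZ ger0_norm // => <-.
rewrite exprMn; lra.
Qed.
End Geo.
Lemma posC (R : realType) (e : R[i]) : 0 < e -> e = (complex.Re e)%:C /\ 0 < complex.Re e.
Proof.
move=> e0; have he : e = (complex.Re e)%:C by rewrite RRe_real // gtr0_real.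
split=> //; move: e0; rewrite [in X in X -> _]he (_ : 0 = 0%:C) //.
by rewrite ltcR.
Qed.

Lemma gt0C (R : realType) (e : R) : 0 < e -> 0 < e%:C.
Proof. by move=> e0; rewrite (_ : 0 = 0%:C) // ltcR. Qed.

Lemma RL1 (R : realType) (M d e n0 nb nm D : R) : 0 <= M -> 0 < d -> d <= 1 ->
  d * (8 * M + 5) <= e ^+ 2 -> 0 < e -> 0 <= n0 -> n0 < M + d ->
  0 <= nb -> nb < M + d -> M <= nm ->
  D ^+ 2 = 2 * n0 ^+ 2 + 2 * nb ^+ 2 - 4 * nm ^+ 2 -> 0 <= D -> D < e.
Proof.
move=> M0 d0 d1 de e0 n00 n0M nb0 nbM Mnm hD D0.
have h1 : n0 ^+ 2 <= (M + d) ^+ 2 by rewrite !expr2; nra.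
have h2 : nb ^+ 2 <= (M + d) ^+ 2 by rewrite !expr2; nra.
have h3 : M ^+ 2 <= nm ^+ 2 by rewrite !expr2; nra.
have h4 : D ^+ 2 < e ^+ 2.
  have : d * d <= d by nra.
  rewrite hD; move: h1 h2 h3 de; rewrite !expr2; nra.
rewrite ltNge; apply/negP => eD; move: h4; rewrite !expr2; nra.
Qed.

Lemma RL2 (R : realType) (M a Y W D : R) : 0 <= M -> 0 <= a -> 0 <= Y ->
  Y <= M + a -> 0 <= W -> M - a <= W ->
  D ^+ 2 = 2 * Y ^+ 2 + 2 * M ^+ 2 - 4 * W ^+ 2 -> D ^+ 2 <= 12 * M * a + 10 * a ^+ 2.
Proof.
move=> M0 a0 Y0 YM W0 MW hD; rewrite hD.
have hY : Y ^+ 2 <= (M + a) ^+ 2 by rewrite !expr2; nra.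
have [aM|Ma] := leP a M.
  have hW : (M - a) ^+ 2 <= W ^+ 2 by rewrite !expr2; nra.
  move: hY hW; rewrite !expr2; nra.
move: hY; rewrite !expr2; nra.
Qed.

Lemma RL3 (R : realType) (M a a0 e D : R) : 0 <= M -> 0 <= a -> a < a0 -> a0 <= 1 ->
  a0 * (12 * M + 11) <= e ^+ 2 -> 0 < e -> 0 <= D ->
  D ^+ 2 <= 12 * M * a + 10 * a ^+ 2 -> D < e.
Proof.
move=> M0 a0' aa a01 ae e0 D0 hD.
have h1 : 12 * M * a + 10 * a ^+ 2 < e ^+ 2.
  have : a * a <= a by nra.
  have : (12 * M + 10) * a < (12 * M + 10) * a0 by rewrite ltr_pM2l //; lra.
  move: ae; rewrite !expr2; nra.
rewrite ltNge; apply/negP => eD; move: h1 hD; rewrite !expr2; nra.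
Qed.

Section Main.
Variable R : realType.
Variable H : completeNormedModType R[i].
Variable ip : H -> H -> R[i].
Hypothesis hip : is_inner_product ip.
Variable T : H -> H.
Hypothesis hlin : linear T.
Hypothesis hcont : continuous T.
Hypothesis hdense : dense (range T).
Variable eps : R.
Hypothesis heps : 0 < eps.

Lemma TB u v : T (u - v) = T u - T v.
Proof. by have := hlin (-1) v u; rewrite !scaleN1r [- v + u]addrC => ->; rewrite addrC. Qed.

Lemma TD u v : T (u + v) = T u + T v.
Proof. by have := hlin 1 u v; rewrite !scale1r. Qed.

Lemma TZ a u : T (a *: u) = a *: T u.
Proof.
have T0 : T 0 = 0.
  have h := hlin 1 0 0; rewrite !scale1r addr0 in h.
  by apply: (addrI (T 0)); rewrite -h addr0.
by have := hlin a u 0; rewrite !addr0 T0 addr0.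
Qed.

Lemma TC x a b (t : R) : 0 <= t <= 1 ->
  nr (T (a + t%:C *: (b - a)) - x) <= (1 - t) * nr (T a - x) + t * nr (T b - x).
Proof.
move=> ht.
have -> : T (a + t%:C *: (b - a)) - x = (T a - x) + t%:C *: ((T b - x) - (T a - x)).
  have -> : (T b - x) - (T a - x) = T b - T a by rewrite opprB addrA subrK.
  by rewrite TD TZ TB addrAC.
exact: conv_nr.
Qed.

Definition C x : set H := [set y | nr (T y - x) <= eps].
Definition m x : R := inf [set nr y | y in C x].

Lemma exists_strict x : exists z, nr (T z - x) < eps.
Proof.
have hO : ball x eps%:C !=set0 by exists x; apply: ballxx; exact: gt0C.
have oO : open (ball x eps%:C) by exact: ball_open.
have [w [bw [z _ Tzw]]] := hdense hO oO.
exists z; move: bw; rewrite -ball_normE /= -Tzw nrE ltcR.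
by rewrite nrC.
Qed.

Lemma C_ne x : exists y, C x y.
Proof. by have [z hz] := exists_strict x; exists z; exact: ltW. Qed.

Lemma hlb x : has_lbound [set nr y | y in C x].
Proof. by exists 0 => _ [y' _ <-]; exact: nr_ge0. Qed.

Lemma m_lb x y : C x y -> m x <= nr y.
Proof. by move=> Cy; apply: (ge_inf (hlb x)); exists y. Qed.

Lemma m_ge0 x : 0 <= m x.
Proof.
apply: lb_le_inf; first by have [y Cy] := C_ne x; exists (nr y), y.
by move=> _ [y' _ <-]; exact: nr_ge0.
Qed.

Lemma m_approx x d : 0 < d -> exists2 y, C x y & nr y < m x + d.
Proof.
move=> d0; have [|_ [y Cy <-] hy] := inf_adherent d0 (E := [set nr y | y in C x]).
  split; last exact: hlb.
  by have [y Cy] := C_ne x; exists (nr y), y.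
by exists y.
Qed.

Lemma mid_C x a b : C x a -> C x b -> C x (a + (2^-1 : R)%:C *: (b - a)).
Proof.
move=> Ca Cb; rewrite /C /=.
have h2 : 0 <= (2^-1 : R) <= 1 by apply/andP; split; lra.
apply: le_trans (TC x a b h2) _.
rewrite /C /= in Ca Cb.
have : (1 - 2^-1) * nr (T a - x) <= (1 - 2^-1) * eps by rewrite ler_wpM2l //; lra.
have : 2^-1 * nr (T b - x) <= 2^-1 * eps by rewrite ler_wpM2l //; lra.
lra.
Qed.

Definition Ext x y := C x y /\ forall y', C x y' -> nr y <= nr y'.

Lemma ext_exists x : exists y, Ext x y.
Proof.
pose B d := [set y | C x y /\ nr y < m x + d].
pose F := filter_from [set d : R | 0 < d] B.
have FF : Filter F.
  apply: filter_from_filter; first by exists 1; rewrite /= ltr01.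
  move=> i j /= i0 j0; exists (Num.min i j); first by rewrite /= lt_min i0 j0.
  move=> y [Cy ny]; split; split=> //; apply: (lt_le_trans ny);
    by rewrite lerD2l ge_min lexx ?orbT.
have PF : ProperFilter F.
  apply: filter_from_proper => // d d0; have [y Cy ny] := m_approx x d0.
  by exists y.
have cF : cauchy F.
  apply: cauchy_exP => e e0.
  have [he e'0] := posC e0; move: (complex.Re e) he e'0 => e' -> e'0.
  have hM := m_ge0 x.
  pose d := Num.min 1 (e' ^+ 2 / (8 * m x + 5)).
  have d0 : 0 < d.
    by rewrite lt_min ltr01 divr_gt0 // ?exprn_gt0 //; lra.
  have d1 : d <= 1 by rewrite ge_min lexx.
  have de : d * (8 * m x + 5) <= e' ^+ 2.
    by rewrite -ler_pdivlMr; [rewrite ge_min lexx orbT | lra].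
  have [y0 Cy0 ny0] := m_approx x d0.
  exists y0; exists d => // b [Cb nb].
  rewrite -ball_normE /= nrE ltcR.
  have hm := m_lb (mid_C Cy0 Cb).
  have hp := mid_para hip y0 b.
  exact: (RL1 hM d0 d1 de e'0 (nr_ge0 _) ny0 (nr_ge0 _) nb hm hp (nr_ge0 _)).
have [y Fy] : exists y : H, F --> y by exists (lim F); exact/cauchy_cvgP.
have near_pt e1 d : 0 < e1 -> 0 < d ->
    exists w, [/\ B d w, nr (y - w) < e1 & nr (T y - T w) < e1].
  move=> e10 d0.
  have h1 : F [set w | `|y - w| < e1%:C].
    by move/fcvgrPdist_lt : Fy => /(_ _ (gt0C e10)).
  have h2 : F [set w | `|T y - T w| < e1%:C].
    have := @hcont y; move/cvgrPdist_lt => /(_ _ (gt0C e10)) h.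
    exact: Fy h.
  have h3 : F (B d) by exists d.
  have [w [[w1 w2] w3]] := filter_ex (filterI (filterI h1 h2) h3).
  by exists w; split => //; rewrite -nr_ltc.
have Cy : C x y.
  rewrite /C /=; apply/ler_addgt0Pr => e1 e10.
  have [w [[Cw _] _ hT]] := near_pt e1 1 e10 ltr01.
  have -> : T y - x = (T y - T w) + (T w - x) by rewrite addrA subrK.
  apply: le_trans (nrD _ _) _; rewrite /C /= in Cw; lra.
have yM : nr y <= m x.
  apply/ler_addgt0Pr => e1 e10.
  have e2 : 0 < e1 / 2 by lra.
  have [w [[Cw nw] hw _]] := near_pt (e1 / 2) (e1 / 2) e2 e2.
  have -> : y = (y - w) + w by rewrite subrK.
  apply: le_trans (nrD _ _) _; lra.
by exists y; split => // y' Cy'; exact: le_trans yM (m_lb Cy').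
Qed.

Lemma cont_at (f : H -> H) x0 : (forall x, Ext x (f x)) -> f @ x0 --> f x0.
Proof.
move=> hf; apply/cvgrPdist_lt => e e0.
have [he e'0] := posC e0; move: (complex.Re e) he e'0 => e' -> e'0.
have [Cy ymin] := hf x0.
set y := f x0 in Cy ymin *.
have hM := nr_ge0 y.
have [z hz] := exists_strict x0.
set r := nr (T z - x0) in hz *.
have g0 : 0 < eps - r by lra.
have Z0 := nr_ge0 z.
pose a0 := Num.min 1 (e' ^+ 2 / (12 * nr y + 11)).
have a00 : 0 < a0.
  by rewrite lt_min ltr01 divr_gt0 // ?exprn_gt0 //; lra.
have a01 : a0 <= 1 by rewrite ge_min lexx.
have a0e : a0 * (12 * nr y + 11) <= e' ^+ 2.
  by rewrite -ler_pdivlMr; [rewrite ge_min lexx orbT | lra].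
pose dd := Num.min (eps - r) ((eps - r) * a0 / (nr z + 1)).
have dd0 : 0 < dd.
  by rewrite lt_min g0 divr_gt0 ?mulr_gt0 //; lra.
apply/nbhs_normP; exists dd%:C; first exact: gt0C.
move=> x' hx; move: hx; rewrite /= nr_ltc => hx.
rewrite nr_ltc.
have [Cy' y'min] := hf x'.
set y' := f x' in Cy' y'min *.
set d := nr (x0 - x') in hx.
have d0 : 0 <= d := nr_ge0 _.
have hdg : d < eps - r by move: hx; rewrite /dd lt_min => /andP[].
have hda : d * (nr z + 1) < (eps - r) * a0.
  by move: hx; rewrite /dd lt_min => /andP[_]; rewrite ltr_pdivlMr //; lra.
pose t := d / (eps - r).
have t0 : 0 <= t by rewrite divr_ge0 //; lra.
have t1 : t <= 1 by rewrite ler_pdivrMr // mul1r; lra.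
have t01 : 0 <= t <= 1 by rewrite t0 t1.
have tg : t * (eps - r) = d by rewrite divfK // gt_eqF.
have ta : t * (nr z + 1) < a0.
  have : (eps - r) * (t * (nr z + 1)) < (eps - r) * a0.
    by rewrite mulrA (mulrC (eps - r)) tg.
  by rewrite ltr_pM2l.
pose yt := y + t%:C *: (z - y).
have Cyt : C x' yt.
  rewrite /C /=.
  have -> : T yt - x' = (T yt - x0) + (x0 - x') by rewrite addrA subrK.
  apply: le_trans (nrD _ _) _.
  have h := TC x0 y z t01.
  rewrite /C /= in Cy.
  have : (1 - t) * nr (T y - x0) <= (1 - t) * eps by rewrite ler_wpM2l // subr_ge0.
  rewrite -/r -/d in h *; nra.
have ny' : nr y' <= nr yt := y'min yt Cyt.
have nyt : nr yt <= (1 - t) * nr y + t * nr z := conv_nr y z t01.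
pose w := y' + (2^-1 : R)%:C *: (y - y').
have h2 : 0 <= (2^-1 : R) <= 1 by apply/andP; split; lra.
have Tw : nr (T w - x0) <= eps + d / 2.
  apply: le_trans (TC x0 y' y h2) _.
  have : nr (T y' - x0) <= eps + d.
    have -> : T y' - x0 = (T y' - x') + (x' - x0) by rewrite addrA subrK.
    apply: le_trans (nrD _ _) _; rewrite (nrC x' x0) -/d; rewrite /C /= in Cy'; lra.
  rewrite /C /= in Cy; move=> hh.
  have : (1 - 2^-1) * nr (T y' - x0) <= (1 - 2^-1) * (eps + d) by rewrite ler_wpM2l //; lra.
  have : 2^-1 * nr (T y - x0) <= 2^-1 * eps by rewrite ler_wpM2l //; lra.
  lra.
pose w' := w + t%:C *: (z - w).
have Cw' : C x0 w'.
  rewrite /C /=; apply: le_trans (TC x0 w z t01) _.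
  have : (1 - t) * nr (T w - x0) <= (1 - t) * (eps + d / 2) by rewrite ler_wpM2l // subr_ge0.
  rewrite -/r; nra.
have hw' : nr y <= nr w' := ymin w' Cw'.
have nw' : nr w' <= (1 - t) * nr w + t * nr z := conv_nr w z t01.
have hp := mid_para hip y' y.
have W0 := nr_ge0 w.
have Y0 := nr_ge0 y'.
have hY : nr y' <= nr y + t * nr z by nra.
have hW : nr y - t * nr z <= nr w by nra.
have a0' : 0 <= t * nr z by rewrite mulr_ge0.
have hD := RL2 hM a0' Y0 hY W0 hW hp.
rewrite nrC; apply: (RL3 hM a0' _ a01 a0e e'0 (nr_ge0 _) hD).
nra.
Qed.

Lemma ext_iff x y : Ext x y <-> is_extremal_vector T x eps y.
Proof.
rewrite /Ext /is_extremal_vector /C /=; split=> -[h1 h2]; split.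
- by rewrite nr_lec.
- move=> y' hy'; rewrite (nrE y) (nrE y') lecR; apply: h2; by rewrite -nr_lec.
- by rewrite -nr_lec.
- move=> y' hy'; have := h2 y'; rewrite nr_lec (nrE y) (nrE y') lecR => h.
  exact: h hy'.
Qed.

Lemma final (A : set H) : {within A, continuous (extremal_vector T eps)}.
Proof.
have hf : forall x, Ext x (extremal_vector T eps x).
  move=> x; apply/ext_iff; apply: xgetPex.
  by have [y hy] := ext_exists x; exists y; apply/ext_iff.
apply/subspace_continuousP => x _.
apply: cvg_trans; [apply: cvg_fmap2; apply: cvg_within | exact: cont_at].
Qed.

End Main.

Unset Implicit Arguments.
Set Strict Implicit.

Theorem mainTheorem8 (R : realType) (H : completeNormedModType R[i])
  (hH : is_hilbert H) (hsep : separable H) (hinf : infinite_dimensional H)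
  (T : H -> H) (hT : bounded_operator T) (hdense : dense (range T))
  (eps : R) (heps : 0 < eps) :
  {within [set x0 : H | eps%:C < `|x0|], continuous (extremal_vector T eps)}.
Proof.
have [hlin hcont] := hT.
have [ip hip] := hH.
by eapply final; eauto.
Qed.
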